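(* Let $M$ be an entrywise nonnegative $m\times n$ real matrix and $r$ a positive integer. Then $\mathrm{rank}^+(M)\le r$ if and only if there exist integers $0\le s,t\le r$, sets $U\subseteq[m]$ with $|U|=s$ and $V\subseteq[n]$ with $|V|=t$, positive integers $p\le\binom rs$ and $q\le\binom rt$, and real matrices $B_1,\dots,B_p$ (each $r\times s$) and $C_1,\dots,C_q$ (each $t\times r$) for which the test $\mathbb P$ outputs PASS.
   Context: $\mathrm{rank}^+(M)$ is the smallest $r$ with $M=AW$, $A\in\mathbb{R}_{\ge0}^{m\times r}$, $W\in\mathbb{R}_{\ge0}^{r\times n}$. Notation: $M_i$ is the $i$-th column, $M^j$ the $j$-th row, $M_i^U\in\mathbb{R}^s$ the entries of column $i$ in rows $U$, $M^j_V\in\mathbb{R}^{1\times t}$ the entries of row $j$ in columns $V$. Support of a vector = set of indices of nonzero entries. Lexicographic ordering on subsets of $[r]$: if $|S|<|T|$ then $S$ precedes $T$; equal-size subsets compared by standard lexicographic order. For a finite collection $\mathcal S$ of vectors, $\mathrm{first}(\mathcal S)$ is the vector with lexicographically minimal support among all entrywise nonnegative vectors in $\mathcal S$; it is FAIL if $\mathcal S$ contains no nonnegative vector or if two or more distinct nonnegative vectors tie for the lexicographically earliest support. The test $\mathbb P$: for each $i\in[n]$ set $W_i=\mathrm{first}(\{B_1M_i^U,\dots,B_pM_i^U\})$ and for each $j\in[m]$ set $A^j=\mathrm{first}(\{M^j_VC_1,\dots,M^j_VC_q\})$; $\mathbb P$ outputs PASS iff none of these is FAIL and $A^jW_i=M^j_i$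 for all $i,j$ (otherwise it outputs FAIL). *)

(* Defs.v *)
From mathcomp Require Import all_boot all_order all_algebra.
From mathcomp Require Import boolp reals.
Set Implicit Arguments. Unset Strict Implicit. Unset Printing Implicit Defensive.
Import Order.TTheory GRing.Theory Num.Theory.
Local Open Scope ring_scope.

Section Defs.
Variable R : realType.

Definition nonnegmx (a b : nat) (A : 'M[R]_(a, b)) : bool :=
  [forall i, [forall j, 0 <= A i j]].

Definition nnfact (m n : nat) (M : 'M[R]_(m, n)) (k : nat) : Prop :=
  exists (A : 'M[R]_(m, k)) (W : 'M[R]_(k, n)),
    [/\ nonnegmx A, nonnegmx W & M = A *m W].

Lemma nnfact_ex (m n : nat) (M : 'M[R]_(m, n)) :
  nonnegmx M -> exists k, `[< nnfact M k >].
Proof.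
move=> HM; exists n; apply/asboolP; exists M, 1%:M; split => //; last by rewrite mulmx1.
by apply/forallP => i; apply/forallP => j; rewrite !mxE ler0n.
Qed.

Definition nnrank (m n : nat) (M : 'M[R]_(m, n)) (HM : nonnegmx M) : nat :=
  ex_minn (nnfact_ex HM).

Definition csupp (r : nat) (v : 'cV[R]_r) : {set 'I_r} := [set k | v k 0 != 0].
Definition rsupp (r : nat) (v : 'rV[R]_r) : {set 'I_r} := [set k | v 0 k != 0].

End Defs.

Fixpoint seq_lexlt (s t : seq nat) : bool :=
  match s, t with
  | [::], [::] => false
  | [::], _ :: _ => true
  | _ :: _, [::] => false
  | x :: s', y :: t' => (x < y)%N || ((x == y) && seq_lexlt s' t')
  end.

Definition set_lexlt (r : nat) (S T : {set 'I_r}) : bool :=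
  (#|S| < #|T|)%N ||
  ((#|S| == #|T|) && seq_lexlt (map val (enum S)) (map val (enum T))).

(* first(S): Some v if v is the unique nonnegative member of S whose support is
   lexicographically minimal among nonnegative members; None (= FAIL) if S has
   no nonnegative member or two distinct nonnegative members tie. *)
Definition firstv (T : eqType) (r : nat) (nonneg : T -> bool)
    (supp : T -> {set 'I_r}) (S : seq T) : option T :=
  ohead [seq v <- S | nonneg v &&
           all (fun w => ~~ nonneg w || (w == v) || set_lexlt (supp v) (supp w)) S].

Section Test.
Variable R : realType.
Variables (m n r : nat) (M : 'M[R]_(m, n)) (U : {set 'I_m}) (V : {set 'I_n}).

(* M_i^U in R^{|U|} (rows of U in increasing order), M^j_V in R^{1 x |V|} *)
Definition colU (i : 'I_n) : 'cV[R]_#|U| := \col_(k < #|U|) M (enum_val k) i.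
Definition rowV (j : 'I_m) : 'rV[R]_#|V| := \row_(k < #|V|) M j (enum_val k).

Variables (p q : nat) (B : 'I_p -> 'M[R]_(r, #|U|)) (C : 'I_q -> 'M[R]_(#|V|, r)).

Definition Wcol (i : 'I_n) : option 'cV[R]_r :=
  firstv (@nonnegmx R r 1) (@csupp R r) [seq B k *m colU i | k <- enum 'I_p].
Definition Arow (j : 'I_m) : option 'rV[R]_r :=
  firstv (@nonnegmx R 1 r) (@rsupp R r) [seq rowV j *m C l | l <- enum 'I_q].

Definition testP : bool :=
  [forall i, Wcol i != None] && [forall j, Arow j != None] &&
  [forall i, [forall j,
     match Arow j, Wcol i with
     | Some a, Some w => (a *m w) 0 0 == M j i
     | _, _ => false
     end]].
End Test.

(* Main.v *)
Require Import Defs.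
From mathcomp Require Import all_boot all_order all_algebra.
From mathcomp Require Import boolp reals.
Set Implicit Arguments. Unset Strict Implicit. Unset Printing Implicit Defensive.
Import Order.TTheory GRing.Theory Num.Theory.
Local Open Scope ring_scope.

Lemma seq_lexlt_asym s t : seq_lexlt s t -> seq_lexlt t s = false.
Proof.
elim: s t => [|x s IH] [|y t] //= /orP [xy|/andP[/eqP exy st]].
  by rewrite ltnNge (ltnW xy) /= eq_sym (ltn_eqF xy).
by rewrite exy ltnn eqxx /= IH.
Qed.

Lemma seq_lexlt_trans s t u : seq_lexlt s t -> seq_lexlt t u -> seq_lexlt s u.
Proof.
elim: s t u => [|x s IH] [|y t] [|z u] //=.
move=> /orP [xy|/andP[/eqP exy st]] /orP [yz|/andP[/eqP eyz tu]].
- by rewrite (ltn_trans xy yz).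
- by rewrite -eyz xy.
- by rewrite exy yz.
- by rewrite exy eyz eqxx (IH _ _ st tu) orbT.
Qed.

Lemma seq_lexlt_total s t : s != t -> seq_lexlt s t || seq_lexlt t s.
Proof.
elim: s t => [|x s IH] [|y t] //= ne.
case: (ltngtP x y) => //= exy.
apply: IH; apply: contraNneq ne => ->; by rewrite exy.
Qed.

Lemma set_lexlt_asym r (S T : {set 'I_r}) : set_lexlt S T -> set_lexlt T S = false.
Proof.
rewrite /set_lexlt => /orP [lt|/andP[/eqP e st]].
  by rewrite ltnNge (ltnW lt) /= eq_sym (ltn_eqF lt).
by rewrite e ltnn eqxx /= seq_lexlt_asym.
Qed.

Lemma set_lexlt_trans r (S T X : {set 'I_r}) : set_lexlt S T -> set_lexlt T X -> set_lexlt S X.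
Proof.
rewrite /set_lexlt => /orP [lt|/andP[/eqP e st]] /orP [lt'|/andP[/eqP e' tx]].
- by rewrite (ltn_trans lt lt').
- by rewrite -e' lt.
- by rewrite e lt'.
- by rewrite e e' eqxx (seq_lexlt_trans st tx) orbT.
Qed.

Lemma set_lexlt_total r (S T : {set 'I_r}) : S != T -> set_lexlt S T || set_lexlt T S.
Proof.
move=> ne; rewrite /set_lexlt.
case: (ltngtP #|S| #|T|) => //= e.
apply: seq_lexlt_total.
apply: contraNneq ne => /(inj_map val_inj) eST.
by rewrite -(set_enum S) -(set_enum T) eST.
Qed.

Lemma seq_min_ex r (s : seq {set 'I_r}) : s != [::] ->
  exists2 x, x \in s & forall y, y \in s -> y = x \/ set_lexlt x y.
Proof.
elim: s => [|a s IH] // _.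
case: (eqVneq s [::]) => [->|sne].
  by exists a; rewrite ?mem_head // => y; rewrite inE => /eqP; left.
have [x xs xmin] := IH sne.
case: (eqVneq a x) => [ax|ax].
  exists x; first by rewrite inE xs orbT.
  by move=> y; rewrite inE => /orP [/eqP ->|/xmin]; [left|].
have /orP [lt|lt] := set_lexlt_total ax.
  exists a; first by rewrite mem_head.
  move=> y; rewrite inE => /orP [/eqP ->|/xmin [->|lt']]; [by left|by right|].
  by right; apply: set_lexlt_trans lt lt'.
exists x; first by rewrite inE xs orbT.
by move=> y; rewrite inE => /orP [/eqP ->|/xmin]; [right|].
Qed.

Lemma firstv_some (T : eqType) r (nonneg : T -> bool) (supp : T -> {set 'I_r})
  (S : seq T) w : w \in S -> nonneg w ->
  (forall v, v \in S -> nonneg v -> v = w \/ set_lexlt (supp w) (supp v)) ->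
  firstv nonneg supp S = Some w.
Proof.
move=> wS nw H; rewrite /firstv.
set F := filter _ S.
have wF : w \in F.
  rewrite mem_filter nw wS andbT /=; apply/allP => v vS.
  case: (boolP (nonneg v)) => //= nv; case: (H v vS nv) => [->|->]; by rewrite ?eqxx ?orbT.
have Fw : forall x, x \in F -> x = w.
  move=> x; rewrite mem_filter => /andP [/andP [nx /allP allx] xS].
  case: (H x xS nx) => // lt1.
  have := allx w wS; rewrite nw /=; case: eqP => //= _ lt2.
  by move: (set_lexlt_asym lt1); rewrite lt2.
by case: F wF Fw => [|x F'] //= _ Fw; rewrite (Fw x (mem_head _ _)).
Qed.

Section Sel.
Variable R : realType.
Variable r : nat.

Definition sel (T : {set 'I_r}) : 'M[R]_(#|T|, r) :=
  \matrix_(a, b) ((enum_val a == b)%:R).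

Lemma sel_mul (T : {set 'I_r}) (v : 'cV[R]_r) a : (sel T *m v) a 0 = v (enum_val a) 0.
Proof.
rewrite !mxE (bigD1 (enum_val a)) //= big1 ?addr0 ?mxE ?eqxx ?mul1r //.
by move=> b /negPf nb; rewrite mxE eq_sym nb mul0r.
Qed.

Lemma selT_mul_in (T : {set 'I_r}) (y : 'cV[R]_#|T|) b (bT : b \in T) :
  ((sel T)^T *m y) b 0 = y (enum_rank_in bT b) 0.
Proof.
rewrite !mxE (bigD1 (enum_rank_in bT b)) //= big1 ?addr0 ?mxE ?enum_rankK_in ?eqxx ?mul1r //.
move=> a na; rewrite !mxE; case: eqP => [e|]; last by rewrite mul0r.
by case/eqP: na; apply: enum_val_inj; rewrite e enum_rankK_in.
Qed.

Lemma selT_mul_out (T : {set 'I_r}) (y : 'cV[R]_#|T|) b : b \notin T ->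
  ((sel T)^T *m y) b 0 = 0.
Proof.
move=> bT; rewrite !mxE big1 // => a _; rewrite !mxE; case: eqP => [e|]; last by rewrite mul0r.
by move: (enum_valP a); rewrite e (negPf bT).
Qed.

Lemma supp_selT (T : {set 'I_r}) (y : 'cV[R]_#|T|) : csupp ((sel T)^T *m y) \subset T.
Proof.
apply/subsetP => b; rewrite inE; apply: contraR => bT.
by rewrite selT_mul_out ?eqxx.
Qed.

Lemma selK (T : {set 'I_r}) (v : 'cV[R]_r) : csupp v \subset T -> (sel T)^T *m (sel T *m v) = v.
Proof.
move=> sv; apply/matrixP => b j; rewrite (ord1 j).
case: (boolP (b \in T)) => bT.
  by rewrite selT_mul_in sel_mul enum_rankK_in.
rewrite selT_mul_out //; apply/eqP; rewrite eq_sym; apply: contraR bT => nz.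
by apply: (subsetP sv); rewrite inE.
Qed.

Lemma selTK (T : {set 'I_r}) (y : 'cV[R]_#|T|) : sel T *m ((sel T)^T *m y) = y.
Proof.
apply/matrixP => a j; rewrite (ord1 j) sel_mul.
by rewrite (selT_mul_in _ (enum_valP a)) enum_valK_in.
Qed.

End Sel.

Lemma inj_row_free (R : realType) t s (X : 'M[R]_(t, s)) :
  (forall z : 'rV_t, z *m X = 0 -> z = 0) -> row_free X.
Proof.
move=> H; rewrite -kermx_eq0; apply/eqP/row_matrixP => i; rewrite row0.
by apply: H; rewrite -row_mul mulmx_ker row0.
Qed.

Lemma nonnegP (R : realType) a b (A : 'M[R]_(a, b)) :
  reflect (forall i j, 0 <= A i j) (nonnegmx A).
Proof.
apply: (iffP idP) => [/forallP H i j|H]; first by have /forallP := H i; apply.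
by apply/forallP => i; apply/forallP => j.
Qed.

Lemma nonnegmx_tr (R : realType) a b (A : 'M[R]_(a, b)) : nonnegmx A^T = nonnegmx A.
Proof.
apply/nonnegP/nonnegP => H i j; last by rewrite mxE.
by have := H j i; rewrite mxE.
Qed.

Lemma col_mulmx (R : realType) a b c (A : 'M[R]_(a, b)) (B : 'M[R]_(b, c)) j :
  col j (A *m B) = A *m col j B.
Proof. by rewrite !colE mulmxA. Qed.

Lemma mx_colP (R : realType) a b (A B : 'M[R]_(a, b)) :
  (forall j, col j A = col j B) -> A = B.
Proof.
move=> H; apply/matrixP => i j; have := congr1 (fun M : 'cV_a => M i 0) (H j).
by rewrite !mxE.
Qed.

Section Core.
Variables (R : realType) (s r : nat) (K : 'M[R]_(s, r)).
Hypothesis Kfree : row_free K.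

Definition inj_on (T : {set 'I_r}) :=
  forall d : 'cV[R]_r, csupp d \subset T -> K *m d = 0 -> d = 0.

Lemma inj_on_free T : inj_on T -> row_free ((K *m (sel R T)^T)^T).
Proof.
move=> iT; apply: inj_row_free => z zX.
have Kd : K *m ((sel R T)^T *m z^T) = 0.
  by apply: trmx_inj; rewrite mulmxA trmx_mul trmxK zX trmx0.
have d0 := iT _ (supp_selT _) Kd.
by apply: trmx_inj; rewrite -(selTK z^T) d0 mulmx0 trmx0.
Qed.

Lemma inj_on_card T : inj_on T -> (#|T| <= s)%N.
Proof.
move=> /inj_on_free /eqP <-; exact: rank_leq_col.
Qed.

Lemma supp_delta (j : 'I_r) : csupp (delta_mx j 0 : 'cV[R]_r) \subset [set j].
Proof.
apply/subsetP => b; rewrite !inE mxE; case: (b == j) => //=; by rewrite eqxx.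
Qed.

Lemma extend T : inj_on T -> exists T' : {set 'I_r}, [/\ T \subset T', #|T'| = s & inj_on T'].
Proof.
move=> iT.
pose P (T' : {set 'I_r}) := (T \subset T') && `[< inj_on T' >].
have PT : P T by rewrite /P subxx; apply/asboolP.
case: (arg_maxnP (fun T' : {set 'I_r} => #|T'|) PT) => T' /andP [sT /asboolP iT'] Tmax.
exists T'; split => //; apply/eqP; rewrite eqn_leq inj_on_card //=.
rewrite leqNgt; apply/negP => lt.
have claim : forall j, exists y : 'cV[R]_r, csupp y \subset T' /\ K *m y = col j K.
  move=> j; case: (boolP (j \in T')) => jT.
    exists (delta_mx j 0); split; last by rewrite colE.
    by apply: subset_trans (supp_delta j) _; rewrite sub1set.
  case: (EM (inj_on (j |: T'))) => [ij|nij].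
    have : P (j |: T') by rewrite /P (subset_trans sT) ?subsetUr //; apply/asboolP.
    move/Tmax; rewrite cardsU1 jT /= add1n ltnn //.
  have [d [sd Kd nd]] : exists d : 'cV[R]_r, [/\ csupp d \subset j |: T', K *m d = 0 & d != 0].
    case: (EM (exists d : 'cV[R]_r, [/\ csupp d \subset j |: T', K *m d = 0 & d != 0])) => // H.
    exfalso; apply: nij => d sd Kd; case: (EM (d = 0)) => // nd.
    by exfalso; apply: H; exists d; split => //; apply/eqP.
  have dj : d j 0 != 0.
    apply/negP => /eqP dj0; move/eqP: nd; apply; apply: iT' => //.
    apply/subsetP => b; rewrite inE => nb; have := subsetP sd b; rewrite inE nb => /(_ isT).
    by rewrite !inE => /orP [/eqP e|//]; move: nb; rewrite e dj0 eqxx.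
  exists (delta_mx j 0 - (d j 0)^-1 *: d); split.
    apply/subsetP => b; rewrite inE !mxE.
    case: (eqVneq b j) => [->|nbj]; first by rewrite !eqxx /= mulVf // subrr eqxx.
    rewrite /= sub0r oppr_eq0 mulf_eq0 negb_or => /andP [_ db].
    have := subsetP sd b; rewrite !inE db => /(_ isT) /orP [/eqP e|//].
    by move: nbj; rewrite e eqxx.
  by rewrite mulmxBr -scalemxAr Kd scaler0 subr0 colE.
have [f Hf] := choice claim.
pose Y : 'M[R]_(r, r) := \matrix_(b, j) (f j) b 0.
have colY j : col j Y = f j by apply/colP => b; rewrite !mxE.
have KY : K *m Y = K by apply: mx_colP => j; rewrite col_mulmx colY (Hf j).2.
have YE : (sel R T')^T *m (sel R T' *m Y) = Y.
  by apply: mx_colP => j; rewrite !col_mulmx colY selK //; case: (Hf j).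
have : (\rank K <= #|T'|)%N.
  rewrite -KY -YE mulmxA; apply: leq_trans (mxrankM_maxl _ _) _; exact: rank_leq_col.
by move/eqP: Kfree => ->; rewrite leqNgt lt.
Qed.

Lemma reduce (x : 'cV[R]_s) (v d : 'cV[R]_r) : nonnegmx v -> K *m v = x -> d != 0 ->
  K *m d = 0 -> csupp d \subset csupp v ->
  exists u, [/\ nonnegmx u, K *m u = x & (#|csupp u| < #|csupp v|)%N].
Proof.
move=> /nonnegP nv Kv nd Kd sd.
have [d' [Kd' sd' [k1 dk1]]] : exists d' : 'cV[R]_r, [/\ K *m d' = 0, csupp d' \subset csupp v &
    exists k, 0 < d' k 0].
  have [k dk] : exists k, d k 0 != 0.
    case: (EM (exists k, d k 0 != 0)) => // H; exfalso; move/eqP: nd; apply.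
    apply/colP => k; rewrite mxE; case: (EM (d k 0 = 0)) => // H'.
    by exfalso; apply: H; exists k; apply/eqP.
  case: (ltrgtP (d k 0) 0) => [neg|pos|z]; last by move: dk; rewrite z eqxx.
    exists (- d); split; first by rewrite mulmxN Kd oppr0.
      apply: subset_trans sd; apply/subsetP => b; rewrite !inE mxE oppr_eq0 //.
    by exists k; rewrite mxE oppr_gt0.
  by exists d; split => //; exists k.
case: (@arg_minP _ _ _ k1 (fun k => 0 < d' k 0) (fun k => v k 0 / d' k 0) dk1) => k0 dk0 Hmin.
set l := v k0 0 / d' k0 0.
have l0 : 0 <= l by rewrite divr_ge0 // ltW.
exists (v - l *: d'); split.
- apply/nonnegP => b j; rewrite (ord1 j) !mxE subr_ge0.
  case: (ltrP 0 (d' b 0)) => db.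
    by rewrite -ler_pdivlMr // Hmin.
  by apply: le_trans (nv b 0); apply: mulr_ge0_le0.
- by rewrite mulmxBr -scalemxAr Kd' scaler0 subr0.
- apply: proper_card; apply/properP; split.
    apply/subsetP => b; rewrite !inE !mxE; apply: contraNneq => vb.
    have : b \notin csupp d' by apply/negP => /(subsetP sd'); rewrite inE vb eqxx.
    by rewrite inE negbK => /eqP ->; rewrite vb mulr0 subr0.
  exists k0.
    by apply: (subsetP sd'); rewrite inE; apply: lt0r_neq0.
  by rewrite inE negbK !mxE /l divfK ?subrr // lt0r_neq0.
Qed.

End Core.

Section Core2.
Variables (R : realType) (s r : nat) (K : 'M[R]_(s, r)).
Hypothesis Kfree : row_free K.

Definition goodT := [set T : {set 'I_r} | (#|T| == s) && `[< inj_on K T >]].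

Definition BS (T : {set 'I_r}) : 'M[R]_(r, s) :=
  (sel R T)^T *m (pinvmx ((K *m (sel R T)^T)^T))^T.

Lemma BS_inv T : T \in goodT -> K *m BS T = 1%:M.
Proof.
rewrite inE => /andP [/eqP cT /asboolP iT].
have fr := inj_on_free iT.
have full : row_full ((K *m (sel R T)^T)^T).
  by rewrite /row_full (eqP fr) cT.
move: (mulmxKpV (A := 1%:M) (B := (K *m (sel R T)^T)^T)); rewrite sub1mx full => /(_ isT).
rewrite mul1mx => H.
by rewrite /BS mulmxA; apply: trmx_inj; rewrite trmx_mul trmxK H trmx1.
Qed.

Lemma supp_BS T y : csupp (BS T *m y) \subset T.
Proof. by rewrite /BS -mulmxA supp_selT. Qed.

Definition Blist (x : 'cV[R]_s) :=
  [seq BS (enum_val k) *m x | k <- enum 'I_#|goodT|].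

Lemma Blist_sol x v : v \in Blist x -> K *m v = x.
Proof.
case/mapP => k _ ->; by rewrite mulmxA BS_inv ?enum_valP // mul1mx.
Qed.

Lemma goodT_ne : (0 < #|goodT|)%N.
Proof.
have i0 : inj_on K set0.
  move=> d sd _; apply/colP => b; rewrite mxE; apply/eqP; apply: contraT => nz.
  by have := subsetP sd b; rewrite !inE nz => /(_ isT).
have [T' [_ c i]] := extend Kfree i0.
by apply/card_gt0P; exists T'; rewrite inE c eqxx; apply/asboolP.
Qed.

Lemma goodT_le : (#|goodT| <= 'C(r, s))%N.
Proof.
rewrite -[X in 'C(X, _)]card_ord -card_draws; apply: subset_leq_card.
by apply/subsetP => T; rewrite !inE => /andP [].
Qed.

Lemma col_first (x : 'cV[R]_s) (w0 : 'cV[R]_r) : nonnegmx w0 -> K *m w0 = x ->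
  exists w, [/\ nonnegmx w, K *m w = x, w \in Blist x &
    forall v, v \in Blist x -> nonnegmx v -> v = w \/ set_lexlt (csupp w) (csupp v)].
Proof.
move=> nw0 Kw0.
pose Supps := [set T : {set 'I_r} | `[< exists v : 'cV[R]_r, [/\ nonnegmx v, K *m v = x & csupp v = T] >]].
have SuppsP v : nonnegmx v -> K *m v = x -> csupp v \in Supps.
  by move=> nv Kv; rewrite inE; apply/asboolP; exists v.
have : enum Supps != [::].
  by apply/eqP => e; have := SuppsP _ nw0 Kw0; rewrite -mem_enum e.
case/seq_min_ex => S; rewrite mem_enum => SS Smin.
have {}Smin T : T \in Supps -> T = S \/ set_lexlt S T by move=> TS; apply: Smin; rewrite mem_enum.
move: (SS); rewrite inE => /asboolP [w [nw Kw sw]].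
have mincard u : nonnegmx u -> K *m u = x -> (#|S| <= #|csupp u|)%N.
  move=> nu Ku; rewrite leqNgt; apply/negP => lt.
  have lt' : set_lexlt (csupp u) S by rewrite /set_lexlt lt.
  case: (Smin _ (SuppsP _ nu Ku)) => [e|lt2].
    by move: lt; rewrite e ltnn.
  by move: (set_lexlt_asym lt'); rewrite lt2.
have iS : inj_on K S.
  move=> d sd Kd; case: (EM (d = 0)) => // /eqP nd.
  have sd' : csupp d \subset csupp w by rewrite sw.
  have [u [nu Ku cu]] := reduce nw Kw nd Kd sd'.
  by move: (mincard _ nu Ku); rewrite leqNgt -sw cu.
have diff0 (T : {set 'I_r}) (v1 v2 : 'cV[R]_r) : inj_on K T -> csupp v1 \subset T ->
    csupp v2 \subset T -> K *m v1 = K *m v2 -> v1 = v2.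
  move=> iT s1 s2 e; apply/eqP; rewrite -subr_eq0; apply/eqP; apply: iT.
    apply/subsetP => b; rewrite inE !mxE => nz.
    case: (boolP (b \in T)) => // bT; move: nz.
    have z1 : v1 b 0 = 0 by apply/eqP; apply: contraR bT => nz; apply: (subsetP s1); rewrite inE.
    have z2 : v2 b 0 = 0 by apply/eqP; apply: contraR bT => nz; apply: (subsetP s2); rewrite inE.
    by rewrite z1 z2 subrr eqxx.
  by rewrite mulmxBr e subrr.
exists w; split => //.
- have [T' [sT' cT' iT']] := extend Kfree iS.
  have gT' : T' \in goodT by rewrite inE cT' eqxx; apply/asboolP.
  apply/mapP; exists (enum_rank_in gT' T'); first by rewrite mem_enum.
  rewrite enum_rankK_in //; apply: (diff0 T') => //.
  - by rewrite sw.
  - exact: supp_BS.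
  - by rewrite Kw mulmxA BS_inv // mul1mx.
- move=> v vL nv; have Kv := Blist_sol vL.
  case: (Smin _ (SuppsP _ nv Kv)) => [e|lt]; last by right; rewrite sw.
  by left; apply: (diff0 S) => //; rewrite ?e ?sw ?Kv ?Kw.
Qed.

End Core2.

Definition AU (R : realType) m r (A : 'M[R]_(m, r)) (U : {set 'I_m}) : 'M[R]_(#|U|, r) :=
  \matrix_(k, b) A (enum_val k) b.

Lemma choose_U (R : realType) m r (A : 'M[R]_(m, r)) :
  exists U : {set 'I_m}, row_free (AU A U) /\ (A <= AU A U)%MS.
Proof.
pose f := maxrankfun A.
pose U := [set f k | k in 'I_(\rank A)].
have sub1 : (rowsub f A <= AU A U)%MS.
  apply/row_subP => k.
  have fkU : f k \in U by apply/imsetP; exists k.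
  apply: (eq_row_sub (enum_rank_in fkU (f k))).
  by apply/rowP => b; rewrite !mxE enum_rankK_in.
have sub : (A <= AU A U)%MS.
  by apply: submx_trans sub1; rewrite -(eq_maxrowsub A) submx_refl.
exists U; split => //.
have cU : #|U| = \rank A by rewrite card_imset ?card_ord //; exact: maxrankfun_inj.
rewrite /row_free eqn_leq rank_leq_row /= {1}cU; exact: mxrankS.
Qed.

Lemma nonneg_mul (R : realType) a b c (A : 'M[R]_(a, b)) (B : 'M[R]_(b, c)) :
  nonnegmx A -> nonnegmx B -> nonnegmx (A *m B).
Proof.
move=> /nonnegP nA /nonnegP nB; apply/nonnegP => i j; rewrite mxE.
by apply: sumr_ge0 => k _; apply: mulr_ge0.
Qed.

Lemma col_main (R : realType) m n r (M : 'M[R]_(m, n)) (A : 'M[R]_(m, r)) (W : 'M[R]_(r, n)) :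
  nonnegmx W -> M = A *m W ->
  exists U : {set 'I_m}, exists p, exists B : 'I_p -> 'M[R]_(r, #|U|),
  [/\ (#|U| <= r)%N, (0 < p)%N, (p <= 'C(r, #|U|))%N &
   forall i, exists w, [/\ nonnegmx w, A *m w = col i M,
      w \in [seq B k *m colU M U i | k <- enum 'I_p] &
      forall v, v \in [seq B k *m colU M U i | k <- enum 'I_p] -> nonnegmx v ->
        v = w \/ set_lexlt (csupp w) (csupp v)]].
Proof.
move=> nW MAW.
have [U [Kfree sAK]] := choose_U A.
set K := AU A U in Kfree sAK.
exists U, #|goodT K|, (fun k => BS K (enum_val k)); split.
- by move/eqP: Kfree => <-; apply: rank_leq_col.
- exact: goodT_ne.
- exact: goodT_le.
move=> i.
have xE : colU M U i = K *m col i W.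
  apply/colP => k; rewrite !mxE MAW !mxE; apply: eq_bigr => b _; by rewrite !mxE.
have nw0 : nonnegmx (col i W).
  by move/nonnegP: nW => nW; apply/nonnegP => a b; rewrite mxE.
have [w [nw Kw wL wmin]] := col_first Kfree nw0 (esym xE).
exists w; split => //.
case/submxP: sAK => Z AZ.
by rewrite AZ -mulmxA Kw xE mulmxA -AZ -col_mulmx -MAW.
Qed.

Lemma pad (R : realType) m n k r (M : 'M[R]_(m, n)) : nnfact M k -> (k <= r)%N -> nnfact M r.
Proof.
move=> [A [W [nA nW MAW]]] kr.
pose E : 'M[R]_(k, r) := \matrix_(a, b) ((a == b :> nat)%:R).
have nE : nonnegmx E by apply/nonnegP => a b; rewrite mxE ler0n.
have EE : E *m E^T = 1%:M.
  apply/matrixP => a c; rewrite !mxE (bigD1 (widen_ord kr a)) //= big1.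
    by rewrite !mxE /= eqxx mul1r addr0 eq_sym.
  move=> b nb; rewrite !mxE; case: (eqVneq (a : nat) b) => [e|]; last by rewrite mul0r.
  by case/eqP: nb; apply: val_inj.
exists (A *m E), (E^T *m W); split.
- exact: nonneg_mul.
- by apply: nonneg_mul => //; rewrite nonnegmx_tr.
- by rewrite mulmxA -(mulmxA A) EE mulmx1.
Qed.

Lemma firstv_nonneg (T : eqType) r (nonneg : T -> bool) (supp : T -> {set 'I_r})
  (S : seq T) v : firstv nonneg supp S = Some v -> nonneg v.
Proof.
rewrite /firstv; set F := filter _ S.
have : all (fun v => nonneg v) F.
  by apply/allP => x; rewrite mem_filter => /andP [/andP [->]].
by case: F => //= x F' /andP [nx _] [<-].
Qed.

Lemma backward (R : realType) m n r (M : 'M[R]_(m, n)) (U : {set 'I_m}) (V : {set 'I_n}) p q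
  (B : 'I_p -> 'M[R]_(r, #|U|)) (C : 'I_q -> 'M[R]_(#|V|, r)) :
  testP M B C -> nnfact M r.
Proof.
move=> /andP [/andP [/forallP HW /forallP HA] /forallP H].
pose A' : 'M[R]_(m, r) := \matrix_(j, b) (odflt 0 (Arow M C j)) 0 b.
pose W' : 'M[R]_(r, n) := \matrix_(b, i) (odflt 0 (Wcol M B i)) b 0.
exists A', W'; split.
- apply/nonnegP => j b; rewrite mxE.
  case E: (Arow M C j) => [a|]; last by rewrite mxE.
  by move/firstv_nonneg/nonnegP: E; apply.
- apply/nonnegP => b i; rewrite mxE.
  case E: (Wcol M B i) => [w|]; last by rewrite mxE.
  by move/firstv_nonneg/nonnegP: E; apply.
- apply/matrixP => j i; have /forallP := H i => /(_ j).
  rewrite !mxE; case EA: (Arow M C j) => [a|] //; case EW: (Wcol M B i) => [w|] //= /eqP <-.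
  by rewrite !mxE; apply: eq_bigr => b _; rewrite !mxE EA EW.
Qed.

Theorem mainTheorem8 (R : realType) (m n r : nat) (M : 'M[R]_(m, n))
    (HM : nonnegmx M) (Hr : (0 < r)%N) :
  (nnrank HM <= r)%N <->
  exists (s t : nat), [/\ (s <= r)%N, (t <= r)%N &
    exists (U : {set 'I_m}) (V : {set 'I_n}), [/\ #|U| = s, #|V| = t &
      exists (p q : nat), [/\ (0 < p)%N, (p <= 'C(r, s))%N, (0 < q)%N,
        (q <= 'C(r, t))%N &
        exists (B : 'I_p -> 'M[R]_(r, #|U|)) (C : 'I_q -> 'M[R]_(#|V|, r)),
          testP M B C]]].
Proof.
split; last first.
  move=> [s [t [_ _ [U [V [_ _ [p [q [_ _ _ _ [B [C T]]]]]]]]]]].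
  have F := backward T.
  rewrite /nnrank; case: ex_minnP => k _; apply; exact/asboolP.
move=> le.
have [A [W [nA nW MAW]]] : nnfact M r.
  apply: (pad _ le); rewrite /nnrank; case: ex_minnP => k /asboolP //.
have [U [p [B [Ur p0 pC Hcol]]]] := col_main nW MAW.
have [wf Hwf] := choice Hcol.
pose W' : 'M[R]_(r, n) := \matrix_(b, i) (wf i) b 0.
have colW' i : col i W' = wf i by apply/colP => b; rewrite !mxE.
have nW' : nonnegmx W'.
  apply/nonnegP => b i; rewrite mxE; by case: (Hwf i) => /nonnegP.
have MAW' : M = A *m W'.
  by apply: mx_colP => i; rewrite col_mulmx colW'; case: (Hwf i).
have MT : M^T = W'^T *m A^T by rewrite MAW' trmx_mul.
have nAT : nonnegmx A^T by rewrite nonnegmx_tr.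
have [V [q [B' [Vr q0 qC Hrow]]]] := col_main nAT MT.
have [af Haf] := choice Hrow.
exists #|U|, #|V|; split => //; exists U, V; split => //; exists p, q; split => //.
exists B, (fun l => (B' l)^T).
have rowVE j : rowV M V j = (colU M^T V j)^T by apply/rowP => k; rewrite !mxE.
have WcolE i : Wcol M B i = Some (wf i).
  by case: (Hwf i) => nw _ wL wmin; apply: firstv_some.
have ArowE j : Arow M (fun l => (B' l)^T) j = Some (af j)^T.
  case: (Haf j) => na _ aL amin; rewrite /Arow.
  have -> : [seq rowV M V j *m (B' l)^T | l <- enum 'I_q] =
      map trmx [seq B' l *m colU M^T V j | l <- enum 'I_q].
    by rewrite -map_comp; apply: eq_map => l /=; rewrite rowVE trmx_mul.
  apply: firstv_some.
  - exact: map_f.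
  - by rewrite nonnegmx_tr.
  move=> v' /mapP [v vL ->]; rewrite nonnegmx_tr => nv.
  have rs (u : 'cV[R]_r) : rsupp u^T = csupp u by apply/setP => b; rewrite !inE mxE.
  by rewrite !rs; case: (amin v vL nv) => [->|]; [left|right].
apply/andP; split; first (apply/andP; split).
- by apply/forallP => i; rewrite WcolE.
- by apply/forallP => j; rewrite ArowE.
apply/forallP => i; apply/forallP => j; rewrite ArowE WcolE.
case: (Haf j) => _ e _ _.
have := congr1 (fun X : 'cV[R]_n => X i 0) e; rewrite !mxE => <-.
apply/eqP; apply: eq_bigr => b _; rewrite !mxE -colW' !mxE mulrC //.
Qed.
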